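(* Suppose $\mathrm{char}(\mathbb{F})=0$ and $h\in\mathbb{F}[x]$. Then $$hA_h=[x,A_h]=[\hat y,A_h]=[A_h,A_h].$$
   Context: For $h\in\mathbb{F}[x]$, $A_h$ is the unital associative $\mathbb{F}$-algebra generated by $x,\hat y$ with defining relation $\hat yx-x\hat y=h$. For $b\in A_h$, $[b,A_h]=\{ba-ab: a\in A_h\}$ (a linear subspace), and $[A_h,A_h]$ is the linear span of all commutators $ab-ba$, $a,b\in A_h$. $hA_h$ is the right ideal generated by $h$ (which is a two-sided ideal since $h$ is normal). *)

(* Defs.v *)
From HB Require Import structures.
From mathcomp Require Import all_boot all_order all_algebra.
Set Implicit Arguments. Unset Strict Implicit. Unset Printing Implicit Defensive.
Import Order.TTheory GRing.Theory Num.Theory.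
Local Open Scope ring_scope.

Definition Ah_rel (F : fieldType) (h : {poly F}) (A : algType F) (x y : A) : Prop :=
  y * x - x * y = horner_alg x h.

(* (A, x, y) is "the unital associative F-algebra generated by x, y with the
   single defining relation yx - xy = h": universal property of the presented
   algebra. *)
Definition is_Ah (F : fieldType) (h : {poly F}) (A : algType F) (x y : A) : Prop :=
  Ah_rel h x y /\
  forall (B : algType F) (a b : B), Ah_rel h a b ->
    (exists f : {lrmorphism A -> B}, f x = a /\ f y = b) /\
    (forall f g : {lrmorphism A -> B},
        f x = a -> f y = b -> g x = a -> g y = b -> forall z, f z = g z).

Definition hideal (F : fieldType) (h : {poly F}) (A : algType F) (x : A) (z : A) : Prop :=
  exists a : A, z = horner_alg x h * a.

Definition comm_with (F : fieldType) (A : algType F) (b : A) (z : A) : Prop :=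
  exists a : A, z = b * a - a * b.

Definition comm_span (F : fieldType) (A : algType F) (z : A) : Prop :=
  exists (n : nat) (c : 'I_n -> F) (a b : 'I_n -> A),
    z = \sum_(i < n) c i *: (a i * b i - b i * a i).

(* Main.v *)
Require Import Defs.
From HB Require Import structures.
From mathcomp Require Import all_boot all_order all_algebra.
From Stdlib Require Import ClassicalEpsilon.
Import GRing.Theory.
Local Open Scope ring_scope.

Section Sub.
Variables (F : fieldType) (A : algType F) (S : {pred A}) (HS : GRing.subalg_closed S).

HB.instance Definition _ := GRing.isSubalgClosed.Build F A S (GRing.subalg_closed_semi HS).

Record subT := SubT { sval : A; _ : sval \in S }.
HB.instance Definition _ := [isSub for sval].
HB.instance Definition _ := [Choice of subT by <:].
HB.instance Definition _ := [SubChoice_isSubAlgebra of subT by <:].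

Lemma sval_horner (a : subT) (p : {poly F}) : sval (horner_alg a p) = horner_alg (sval a) p.
Proof.
elim/poly_ind: p => [|p c IH]; first by rewrite !rmorph0.
rewrite !rmorphD !rmorphM /= !horner_algX !horner_algC.
rewrite IH; congr (_ + _); by rewrite linearZ /= rmorph1.
Qed.

Section VF.
Variable f : {lrmorphism A -> subT}.
Definition vf : A -> A := fun a => val (f a).
HB.instance Definition _ := GRing.RMorphism.copy vf (val \o f)%FUN.
HB.instance Definition _ := GRing.Linear.copy vf (val \o f)%FUN.
Definition vfL : {lrmorphism A -> A} := vf.
End VF.

Variables (h : {poly F}) (x y : A) (HA : is_Ah h x y) (Sx : x \in S) (Sy : y \in S).

Lemma gen_sub z : z \in S.
Proof.
pose xs := SubT x Sx. pose ys := SubT y Sy.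
have Hr : Ah_rel h xs ys.
  apply: val_inj; rewrite /= sval_horner /=.
  by case: HA => -> _.
case: HA => _ /(_ _ xs ys Hr) [[f [fx fy]] _].
have := HA.2 A x y HA.1.
case=> _ /(_ (vfL f) idfun) U.
have E : vfL f z = z.
  apply: U => //.
  - by rewrite /= /vf fx.
  - by rewrite /= /vf fy.
rewrite -E /= /vf; exact: valP.
Qed.
End Sub.

Section Main.
Variables (F : fieldType) (h : {poly F}) (A : algType F) (x y : A) (HA : is_Ah h x y).

Lemma genP (P : A -> Prop) : P 1 -> P x -> P y ->
  (forall a b, P a -> P b -> P (a + b)) -> (forall (c : F) a, P a -> P (c *: a)) ->
  (forall a b, P a -> P b -> P (a * b)) -> forall z, P z.
Proof.
move=> P1 Px Py PD PZ PM z.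
pose S : {pred A} := fun z => if excluded_middle_informative (P z) then true else false.
have SP : forall w, w \in S <-> P w.
  by move=> w; rewrite unfold_in /S; case: excluded_middle_informative.
have HS : GRing.subalg_closed S.
  split.
  - by apply/SP.
  - move=> c u v /SP Pu /SP Pv; apply/SP; exact: PD (PZ _ _ Pu) Pv.
  - move=> u v /SP Pu /SP Pv; apply/SP; exact: PM.
apply/SP; apply: (@gen_sub F A S HS h x y HA); exact/SP.
Qed.

Lemma lgenP (P : A -> Prop) : P 1 -> (forall a b, P a -> P b -> P (a + b)) ->
  (forall (c : F) a, P a -> P (c *: a)) -> (forall a, P a -> P (x * a)) ->
  (forall a, P a -> P (y * a)) -> forall z, P z.
Proof.
move=> P1 PD PZ Px Py z.
suff: forall a w, P w -> P (a * w) by move/(_ z 1 P1); rewrite mulr1.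
apply: (genP (fun a => forall w, P w -> P (a * w))).
- by move=> w; rewrite mul1r.
- by move=> w Pw; exact: Px.
- by move=> w Pw; exact: Py.
- by move=> a b Ha Hb w Pw; rewrite mulrDl; apply: PD; [apply: Ha|apply: Hb].
- by move=> c a Ha w Pw; rewrite -scalerAl; apply: PZ; apply: Ha.
- by move=> a b Ha Hb w Pw; rewrite -mulrA; apply: Ha; apply: Hb.
Qed.

Local Notation P := (horner_alg x).
Local Notation H := (horner_alg x h).
Definition cm (a b : A) := a * b - b * a.

Lemma cmM a b c : cm a (b * c) = cm a b * c + b * cm a c.
Proof. by rewrite /cm mulrBl mulrBr !mulrA addrA subrK. Qed.
Lemma cmMl a b c : cm (a * b) c = a * cm b c + cm a c * b.
Proof. by rewrite /cm mulrBr mulrBl !mulrA addrA subrK. Qed.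
Lemma cmD a b c : cm a (b + c) = cm a b + cm a c.
Proof. by rewrite /cm mulrDr mulrDl opprD addrACA. Qed.
Lemma cmDl a b c : cm (a + b) c = cm a c + cm b c.
Proof. by rewrite /cm mulrDr mulrDl opprD addrACA. Qed.
Lemma cmZ a k b : cm a (k *: b) = k *: cm a b.
Proof. by rewrite /cm -scalerAr -scalerAl scalerBr. Qed.
Lemma cmZl a k b : cm (k *: a) b = k *: cm a b.
Proof. by rewrite /cm -scalerAr -scalerAl scalerBr. Qed.
Lemma cm0 a : cm a 0 = 0. Proof. by rewrite /cm mulr0 mul0r subrr. Qed.
Lemma cm0l a : cm 0 a = 0. Proof. by rewrite /cm mulr0 mul0r subrr. Qed.
Lemma cm1 a : cm a 1 = 0. Proof. by rewrite /cm mulr1 mul1r subrr. Qed.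
Lemma cm1l a : cm 1 a = 0. Proof. by rewrite /cm mulr1 mul1r subrr. Qed.
Lemma cmaa a : cm a a = 0. Proof. by rewrite /cm subrr. Qed.
Lemma cmB a b c : cm a (b - c) = cm a b - cm a c.
Proof. by rewrite -scaleN1r cmD cmZ scaleN1r. Qed.

Lemma commP p q : P p * P q = P q * P p.
Proof. by rewrite -!rmorphM mulrC. Qed.
Lemma commxP p : x * P p = P p * x.
Proof. by have := commP 'X p; rewrite horner_algX. Qed.
Lemma cmxP p : cm x (P p) = 0.
Proof. by rewrite /cm commxP subrr. Qed.
Lemma cmyX k : cm y (y ^+ k) = 0.
Proof. by rewrite /cm -exprS -exprSr subrr. Qed.
Lemma cmyx : cm y x = H. Proof. exact: HA.1. Qed.
Lemma cmxy : cm x y = - H. Proof. by rewrite -cmyx /cm opprB. Qed.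

Lemma cmyP p : cm y (P p) = H * P (p^`()).
Proof.
elim/poly_ind: p => [|p c IH]; first by rewrite deriv0 !rmorph0 cm0 mulr0.
rewrite derivMXaddC !rmorphD !rmorphM /= !horner_algX !horner_algC cmD cmM IH cmyx.
rewrite cmZ cm1 scaler0 addr0 mulrDr mulrA addrC; congr (_ + _); exact: commP.
Qed.

Lemma ymul q : y * P q = P q * y + H * P q^`().
Proof. by rewrite -cmyP /cm addrC subrK. Qed.

Lemma yH : y * H = H * (y + P h^`()).
Proof. by rewrite ymul mulrDr; congr (_ + _); apply: commP. Qed.

Lemma RH z : exists c, z * H = H * c.
Proof.
apply: (genP (fun z => exists c, z * H = H * c)).
- by exists 1; rewrite mul1r mulr1.
- by exists x; have := commP 'X h; rewrite horner_algX.
- by exists (y + P h^`()); exact: yH.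
- by move=> a b [c Hc] [d Hd]; exists (c + d); rewrite mulrDl Hc Hd mulrDr.
- by move=> k a [c Hc]; exists (k *: c); rewrite -scalerAl -scalerAr; congr (_ *: _).
- by move=> a b [c Hc] [d Hd]; exists (c * d); rewrite -mulrA Hd [a * (H * d)]mulrA Hc -mulrA.
Qed.

Lemma I0 : hideal h x 0. Proof. by exists 0; rewrite mulr0. Qed.
Lemma ID a b : hideal h x a -> hideal h x b -> hideal h x (a + b).
Proof. by move=> [c ->] [d ->]; exists (c + d); rewrite mulrDr. Qed.
Lemma IZ k a : hideal h x a -> hideal h x (k *: a).
Proof. by move=> [c ->]; exists (k *: c); rewrite scalerAr. Qed.
Lemma IR a b : hideal h x a -> hideal h x (a * b).
Proof. by move=> [c ->]; exists (c * b); rewrite mulrA. Qed.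
Lemma IL a b : hideal h x a -> hideal h x (b * a).
Proof. by move=> [c ->]; have [d Hd] := RH b; exists (d * c); rewrite [b * _]mulrA Hd -mulrA. Qed.

Lemma cmx_I a : hideal h x (cm x a).
Proof.
apply: (genP (fun a => hideal h x (cm x a))).
- by rewrite cm1; exact: I0.
- by rewrite cmaa; exact: I0.
- by rewrite cmxy; exists (-1); rewrite mulrN1.
- by move=> u v Hu Hv; rewrite cmD; exact: ID.
- by move=> k u Hu; rewrite cmZ; exact: IZ.
- by move=> u v Hu Hv; rewrite cmM; apply: ID; [exact: IR|exact: IL].
Qed.

Lemma cmy_I a : hideal h x (cm y a).
Proof.
apply: (genP (fun a => hideal h x (cm y a))).
- by rewrite cm1; exact: I0.
- by rewrite cmyx; exists 1; rewrite mulr1.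
- by rewrite cmaa; exact: I0.
- by move=> u v Hu Hv; rewrite cmD; exact: ID.
- by move=> k u Hu; rewrite cmZ; exact: IZ.
- by move=> u v Hu Hv; rewrite cmM; apply: ID; [exact: IR|exact: IL].
Qed.

Lemma cm_I a b : hideal h x (cm a b).
Proof.
move: b; apply: (genP (fun a => forall b, hideal h x (cm a b))).
- by move=> b; rewrite cm1l; exact: I0.
- exact: cmx_I.
- exact: cmy_I.
- by move=> u v Hu Hv b; rewrite cmDl; exact: ID.
- by move=> k u Hu b; rewrite cmZl; exact: IZ.
- by move=> u v Hu Hv b; rewrite cmMl; apply: ID; [exact: IL|exact: IR].
Qed.

Definition mono (t : {poly F} * nat) := P t.1 * y ^+ t.2.
Definition Dn (n : nat) (z : A) := exists s : seq ({poly F} * nat),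
  all (fun t => t.2 < n)%N s /\ z = \sum_(t <- s) mono t.

Lemma Dn_ind n (Q : A -> Prop) : Q 0 -> (forall a b, Q a -> Q b -> Q (a + b)) ->
  (forall q k, (k < n)%N -> Q (P q * y ^+ k)) -> forall z, Dn n z -> Q z.
Proof.
move=> Q0 QD Qm z [s [hs ->]]; elim: s hs => [|t s IH] /=; first by rewrite big_nil.
move=> /andP [ht hs]; rewrite big_cons; apply: QD; [exact: Qm | exact: IH].
Qed.

Lemma Dn0 n : Dn n 0. Proof. by exists [::]; rewrite big_nil. Qed.
Lemma DnD n a b : Dn n a -> Dn n b -> Dn n (a + b).
Proof.
move=> [s [hs ->]] [t [ht ->]]; by exists (s ++ t); rewrite all_cat hs ht big_cat.
Qed.
Lemma Dnm n q k : (k < n)%N -> Dn n (P q * y ^+ k).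
Proof. by move=> hk; exists [:: (q, k)]; rewrite /= hk big_seq1. Qed.
Lemma Dn_mono n m z : (n <= m)%N -> Dn n z -> Dn m z.
Proof.
move=> le; apply: Dn_ind; [exact: Dn0 | exact: DnD |].
by move=> q k hk; apply: Dnm; exact: leq_trans hk le.
Qed.
Lemma PZ c q : P (c *: q) = c *: P q.
Proof. by rewrite -mul_polyC rmorphM /= horner_algC mulr_algl. Qed.

Lemma DnZ n c z : Dn n z -> Dn n (c *: z).
Proof.
move: z; apply: Dn_ind.
- by rewrite scaler0; exact: Dn0.
- by move=> a b Ha Hb; rewrite scalerDr; exact: DnD.
- by move=> q k hk; rewrite scalerAl -PZ; exact: Dnm.
Qed.
Lemma DnB n a b : Dn n a -> Dn n b -> Dn n (a - b).
Proof. by move=> Ha Hb; rewrite -scaleN1r; apply: DnD => //; exact: DnZ. Qed.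
Lemma DnP n q z : Dn n z -> Dn n (P q * z).
Proof.
move: z; apply: Dn_ind.
- by rewrite mulr0; exact: Dn0.
- by move=> a b Ha Hb; rewrite mulrDr; exact: DnD.
- by move=> r k hk; rewrite mulrA -rmorphM; exact: Dnm.
Qed.
Lemma Dny n z : Dn n z -> Dn n.+1 (y * z).
Proof.
move: z; apply: Dn_ind.
- by rewrite mulr0; exact: Dn0.
- by move=> a b Ha Hb; rewrite mulrDr; exact: DnD.
- move=> r k hk; rewrite mulrA ymul mulrDl -mulrA -exprS -rmorphM.
  by apply: DnD; apply: Dnm => //; exact: ltnW.
Qed.

Lemma nf_all z : exists n, Dn n z.
Proof.
apply: (lgenP (fun z => exists n, Dn n z)).
- by exists 1%N; have := @Dnm 1 1 0 isT; rewrite rmorph1 expr0 mulr1.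
- move=> a b [n Ha] [m Hb]; exists (maxn n m).
  by apply: DnD; [apply: Dn_mono Ha; exact: leq_maxl | apply: Dn_mono Hb; exact: leq_maxr].
- by move=> c a [n Ha]; exists n; exact: DnZ.
- by move=> a [n Ha]; exists n; have := @DnP n 'X a Ha; rewrite horner_algX.
- by move=> a [n Ha]; exists n.+1; exact: Dny.
Qed.

Lemma ab_aux (V : zmodType) (Y E a b : V) : -Y + (E - (a + b)) = E - b - (a + Y).
Proof. by rewrite !opprD addrCA !addrA [E - Y - a - b]addrAC [E - Y - b]addrAC [E - b - Y - a]addrAC. Qed.

Variable hF : [pchar F] =i pred0.

Lemma natn0 n : (n.+1%:R : F) != 0.
Proof. by move/pcharf0P: hF => ->. Qed.

Lemma antider q : exists r : {poly F}, r^`() = q.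
Proof.
exists (\poly_(i < (size q).+1) (q`_i.-1 / i%:R)).
apply/polyP => i; rewrite coef_deriv coef_poly ltnS /=.
case: ltnP => hi.
- by rewrite -[_ *+ i.+1]mulr_natr -mulrA mulVf ?mulr1 // natn0.
- by rewrite mul0rn nth_default.
Qed.

Lemma I_cmy a : exists b, H * a = cm y b.
Proof.
have [n Hn] := nf_all a; move: a Hn; apply: Dn_ind.
- by exists 0; rewrite mulr0 cm0.
- by move=> u v [b Hb] [b' Hb']; exists (b + b'); rewrite mulrDr Hb Hb' cmD.
- move=> q k _; have [r Hr] := antider q; exists (P r * y ^+ k).
  by rewrite cmM cmyX mulr0 addr0 cmyP Hr mulrA.
Qed.

Lemma Cn n : exists e, Dn n e /\ cm x (y ^+ n.+1) = H * (e - y ^+ n *+ n.+1).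
Proof.
elim: n => [|n [e [De E]]].
  exists 0; split; first exact: Dn0.
  by rewrite expr1 expr0 mulr1n sub0r mulrN1 cmxy.
exists ((y + P h^`()) * e - (P h^`() * y ^+ n) *+ n.+1); split.
  apply: DnB.
  - rewrite mulrDl; apply: DnD; first exact: Dny.
    apply: (@Dn_mono n n.+1 _ (leqnSn n)); exact: DnP.
  - rewrite -scaler_nat; apply: DnZ; exact: Dnm.
rewrite exprS cmM cmxy E mulrA yH -mulrA mulNr -mulrN -mulrDr; congr (_ * _).
rewrite mulrBr mulrnAr [(y + P h^`()) * y ^+ n]mulrDl -exprS mulrnDl [y ^+ n.+1 *+ n.+2]mulrSr.
exact: ab_aux.
Qed.

Lemma HD n z : Dn n z -> exists b, H * z = cm x b.
Proof.
have Q0 : exists b, H * 0 = cm x b by exists 0; rewrite mulr0 cm0.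
have QD : forall u v, (exists b, H * u = cm x b) -> (exists b, H * v = cm x b) ->
    exists b, H * (u + v) = cm x b.
  by move=> u v [b Hb] [b' Hb']; exists (b + b'); rewrite mulrDr Hb Hb' cmD.
elim: n z => [|n IH]; apply: Dn_ind => //.
move=> q k; rewrite ltnS leq_eqVlt => /orP [/eqP -> | hk]; last by apply: IH; exact: Dnm.
have [e [De E]] := Cn n.
have [b' Hb'] := IH _ (@DnP n q e De).
exists ((n.+1%:R)^-1 *: (b' - P q * y ^+ n.+1)).
rewrite cmZ cmB -Hb' cmM cmxP mul0r add0r E.
rewrite [P q * (H * _)]mulrA (commP q h) -mulrA -mulrBr [P q * (e - _)]mulrBr opprB addrC subrK.
by rewrite mulrnAr mulrnAr -scaler_nat scalerA mulVf ?natn0 // scale1r.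
Qed.

End Main.

Theorem proposition6p2 (F : fieldType) (hF : [pchar F] =i pred0)
  (h : {poly F}) (A : algType F) (x y : A) (HA : is_Ah h x y) :
  (forall z : A, hideal h x z <-> comm_with x z) /\
  (forall z : A, comm_with x z <-> comm_with y z) /\
  (forall z : A, comm_with y z <-> comm_span z).
Proof.
have Ix : forall z, hideal h x z -> comm_with x z.
  move=> z [a ->]; have [n Hn] := @nf_all _ _ _ _ _ HA a; exact: (@HD _ _ _ _ _ HA hF n).
have Iy : forall z, hideal h x z -> comm_with y z.
  by move=> z [a ->]; exact: (@I_cmy _ _ _ _ _ HA hF a).
have xI : forall z, comm_with x z -> hideal h x z.
  by move=> z [a ->]; exact: (@cmx_I _ _ _ _ _ HA a).
have yI : forall z, comm_with y z -> hideal h x z.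
  by move=> z [a ->]; exact: (@cmy_I _ _ _ _ _ HA a).
have sI : forall z, comm_span z -> hideal h x z.
  move=> z [n [c [a [b ->]]]].
  elim/big_ind: _ => //; first exact: I0.
  - by move=> u v; exact: ID.
  - by move=> i _; apply: IZ; exact: (@cm_I _ _ _ _ _ HA).
split; first by move=> z; split; [exact: Ix | exact: xI].
split; first by move=> z; split=> H; [exact: Iy (xI _ H) | exact: Ix (yI _ H)].
move=> z; split; last by move=> H; exact: Iy (sI _ H).
move=> [a ->]; exists 1%N, (fun _ => 1), (fun _ => y), (fun _ => a).
by rewrite big_ord1 scale1r.
Qed.
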